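(* Let $\Sigma$ be a set. The free adequate monoid on $\Sigma$ is isomorphic to the free adequate semigroup on $\Sigma$ with a single adjoined element which is an identity for multiplication and a fixed point for $*$ and $+$.
   Context: For a semigroup $S$ let $S^1=S$ if $S$ is a monoid and otherwise $S$ with an identity adjoined. $a\,\mathcal{L}^*\,b$ iff for all $x,y\in S^1$: $ax=ay\Leftrightarrow bx=by$; $a\,\mathcal{R}^*\,b$ iff for all $x,y\in S^1$: $xa=ya\Leftrightarrow xb=yb$. $S$ is adequate if its idempotents commute and every $\mathcal{L}^*$-class and every $\mathcal{R}^*$-class contains an idempotent (necessarily unique); $x^+$ is the idempotent $\mathcal{R}^*$-related to $x$, $x^*$ the idempotent $\mathcal{L}^*$-related to $x$. Adequate semigroups are $(2,1,1)$-algebras (multiplication, $+$, $*$) and adequate monoids $(2,1,1,0)$-algebras (with the identity as constant); morphisms preserve all these operations. The free adequate semigroup [monoid] on $\Sigma$ is an adequate semigroup [monoid] containing $\Sigma$ such that every map from $\Sigma$ into an adequate semigroup [monoid] extends uniquely to a morphism; isomorphism here is as $(2,1,1,0)$-algebras. *)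

(* Defs.v *)
Set Implicit Arguments.
Section Stars.
Variable S : Type.
Variable mul : S -> S -> S.

(* S^1 for a semigroup: S with an identity adjoined, represented as [option S]
   ([None] is the adjoined identity). *)
Definition ract (a : S) (x : option S) : S :=
  match x with None => a | Some x => mul a x end.
Definition lact (x : option S) (a : S) : S :=
  match x with None => a | Some x => mul x a end.

Definition Lstar (a b : S) : Prop :=
  forall x y : option S, ract a x = ract a y <-> ract b x = ract b y.
Definition Rstar (a b : S) : Prop :=
  forall x y : option S, lact x a = lact y a <-> lact x b = lact y b.

Definition idempotent (e : S) : Prop := mul e e = e.

Definition adequate : Prop :=
  (forall e f, idempotent e -> idempotent f -> mul e f = mul f e) /\
  (forall a, exists e, idempotent e /\ Lstar a e) /\
  (forall a, exists e, idempotent e /\ Rstar a e).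

(* Monoid versions: S^1 = S when S is a monoid. *)
Definition LstarM (a b : S) : Prop :=
  forall x y : S, mul a x = mul a y <-> mul b x = mul b y.
Definition RstarM (a b : S) : Prop :=
  forall x y : S, mul x a = mul y a <-> mul x b = mul y b.

Definition adequateM : Prop :=
  (forall e f, idempotent e -> idempotent f -> mul e f = mul f e) /\
  (forall a, exists e, idempotent e /\ LstarM a e) /\
  (forall a, exists e, idempotent e /\ RstarM a e).
End Stars.
Unset Implicit Arguments.

Record adequate_semigroup := AdSg {
  as_car :> Type;
  as_mul : as_car -> as_car -> as_car;
  as_plus : as_car -> as_car;
  as_star : as_car -> as_car;
  as_mulA : forall x y z, as_mul x (as_mul y z) = as_mul (as_mul x y) z;
  as_adequate : adequate as_mul;
  as_plus_idem : forall x, idempotent as_mul (as_plus x);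
  as_plus_R : forall x, Rstar as_mul x (as_plus x);
  as_star_idem : forall x, idempotent as_mul (as_star x);
  as_star_L : forall x, Lstar as_mul x (as_star x)
}.

Record adequate_monoid := AdMon {
  am_car :> Type;
  am_mul : am_car -> am_car -> am_car;
  am_plus : am_car -> am_car;
  am_star : am_car -> am_car;
  am_one : am_car;
  am_mulA : forall x y z, am_mul x (am_mul y z) = am_mul (am_mul x y) z;
  am_mul1l : forall x, am_mul am_one x = x;
  am_mulr1 : forall x, am_mul x am_one = x;
  am_adequate : adequateM am_mul;
  am_plus_idem : forall x, idempotent am_mul (am_plus x);
  am_plus_R : forall x, RstarM am_mul x (am_plus x);
  am_star_idem : forall x, idempotent am_mul (am_star x);
  am_star_L : forall x, LstarM am_mul x (am_star x)
}.

Definition as_morphism (S T : adequate_semigroup) (f : S -> T) : Prop :=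
  (forall x y, f (as_mul S x y) = as_mul T (f x) (f y)) /\
  (forall x, f (as_plus S x) = as_plus T (f x)) /\
  (forall x, f (as_star S x) = as_star T (f x)).

Definition am_morphism (M N : adequate_monoid) (f : M -> N) : Prop :=
  (forall x y, f (am_mul M x y) = am_mul N (f x) (f y)) /\
  (forall x, f (am_plus M x) = am_plus N (f x)) /\
  (forall x, f (am_star M x) = am_star N (f x)) /\
  f (am_one M) = am_one N.

Definition is_free_adequate_semigroup (Sigma : Type)
    (F : adequate_semigroup) (iota : Sigma -> F) : Prop :=
  forall (S : adequate_semigroup) (f : Sigma -> S),
    exists phi : F -> S, as_morphism F S phi /\ (forall a, phi (iota a) = f a) /\
      forall psi : F -> S, as_morphism F S psi ->
        (forall a, psi (iota a) = f a) -> forall x, psi x = phi x.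

Definition is_free_adequate_monoid (Sigma : Type)
    (M : adequate_monoid) (iota : Sigma -> M) : Prop :=
  forall (N : adequate_monoid) (f : Sigma -> N),
    exists phi : M -> N, am_morphism M N phi /\ (forall a, phi (iota a) = f a) /\
      forall psi : M -> N, am_morphism M N psi ->
        (forall a, psi (iota a) = f a) -> forall x, psi x = phi x.

Section Adjoin.
Variable F : adequate_semigroup.
Definition adj_mul (x y : option F) : option F :=
  match x, y with
  | None, _ => y
  | _, None => x
  | Some a, Some b => Some (as_mul F a b)
  end.
Definition adj_plus (x : option F) : option F :=
  match x with None => None | Some a => Some (as_plus F a) end.
Definition adj_star (x : option F) : option F :=
  match x with None => None | Some a => Some (as_star F a) end.
Definition adj_one : option F := None.
End Adjoin.

Definition iso_to_adjoin (M : adequate_monoid) (F : adequate_semigroup)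
    (phi : M -> option F) : Prop :=
  (exists psi : option F -> M,
      (forall x, psi (phi x) = x) /\ (forall y, phi (psi y) = y)) /\
  (forall x y, phi (am_mul M x y) = adj_mul F (phi x) (phi y)) /\
  (forall x, phi (am_plus M x) = adj_plus F (phi x)) /\
  (forall x, phi (am_star M x) = adj_star F (phi x)) /\
  phi (am_one M) = adj_one F.

(* Main.v *)
Require Import Defs.

Section ToSg.
Variable N : adequate_monoid.
Definition oget1 (x : option N) : N := match x with None => am_one N | Some x => x end.
Lemma ractE (a : N) x : ract (am_mul N) a x = am_mul N a (oget1 x).
Proof. destruct x; simpl; [reflexivity| now rewrite am_mulr1]. Qed.
Lemma lactE (a : N) x : lact (am_mul N) x a = am_mul N (oget1 x) a.
Proof. destruct x; simpl; [reflexivity| now rewrite am_mul1l]. Qed.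
Lemma LstarM_Lstar a b : LstarM (am_mul N) a b -> Lstar (am_mul N) a b.
Proof. intros H x y. rewrite !ractE. apply H. Qed.
Lemma RstarM_Rstar a b : RstarM (am_mul N) a b -> Rstar (am_mul N) a b.
Proof. intros H x y. rewrite !lactE. apply H. Qed.
Lemma adequateM_adequate : adequate (am_mul N).
Proof.
  split; [apply (proj1 (am_adequate N))|split]; intro a.
  - exists (am_star N a); split; [apply am_star_idem | apply LstarM_Lstar, am_star_L].
  - exists (am_plus N a); split; [apply am_plus_idem | apply RstarM_Rstar, am_plus_R].
Qed.
Definition toSg : adequate_semigroup :=
  AdSg (am_car N) (am_mul N) (am_plus N) (am_star N) (am_mulA N) adequateM_adequate
    (am_plus_idem N) (fun x => @RstarM_Rstar x (am_plus N x) (am_plus_R N x))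
    (am_star_idem N) (fun x => @LstarM_Lstar x (am_star N x) (am_star_L N x)).

Lemma plus_one : am_plus N (am_one N) = am_one N.
Proof.
  pose proof (am_plus_R N (am_one N) (am_plus N (am_one N)) (am_one N)) as H.
  rewrite !am_mulr1, !am_mul1l in H. apply H. apply am_plus_idem.
Qed.
Lemma star_one : am_star N (am_one N) = am_one N.
Proof.
  pose proof (am_star_L N (am_one N) (am_star N (am_one N)) (am_one N)) as H.
  rewrite !am_mulr1, !am_mul1l in H. apply H. apply am_star_idem.
Qed.
End ToSg.

Section AdjM.
Variable F : adequate_semigroup.
Lemma adj_mulA x y z : adj_mul F x (adj_mul F y z) = adj_mul F (adj_mul F x y) z.
Proof. destruct x, y, z; simpl; try reflexivity. now rewrite as_mulA. Qed.
Lemma adj_mul1l x : adj_mul F None x = x. Proof. reflexivity. Qed.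
Lemma adj_mulr1 x : adj_mul F x None = x. Proof. destruct x; reflexivity. Qed.
Lemma adj_mulSr x a : adj_mul F x (Some a) = Some (lact (as_mul F) x a).
Proof. destruct x; reflexivity. Qed.
Lemma adj_mulSl a x : adj_mul F (Some a) x = Some (ract (as_mul F) a x).
Proof. destruct x; reflexivity. Qed.

Lemma adj_plus_R x : RstarM (adj_mul F) x (adj_plus F x).
Proof.
  destruct x as [a|]; intros u v.
  - change (adj_plus F (Some a)) with (Some (as_plus F a)).
    rewrite !adj_mulSr. pose proof (as_plus_R F a u v) as H.
    split; intro H'; injection H' as H'; f_equal; apply H; exact H'.
  - tauto.
Qed.
Lemma adj_star_L x : LstarM (adj_mul F) x (adj_star F x).
Proof.
  destruct x as [a|]; intros u v.
  - change (adj_star F (Some a)) with (Some (as_star F a)).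
    rewrite !adj_mulSl. pose proof (as_star_L F a u v) as H.
    split; intro H'; injection H' as H'; f_equal; apply H; exact H'.
  - tauto.
Qed.
Lemma adj_plus_idem x : idempotent (adj_mul F) (adj_plus F x).
Proof. destruct x; unfold idempotent; cbn; [f_equal; apply as_plus_idem | reflexivity]. Qed.
Lemma adj_star_idem x : idempotent (adj_mul F) (adj_star F x).
Proof. destruct x; unfold idempotent; cbn; [f_equal; apply as_star_idem | reflexivity]. Qed.
Lemma adjM_adequate : adequateM (adj_mul F).
Proof.
  split; [|split]; intros.
  - destruct e as [a|], f as [b|]; try (destruct e; reflexivity);
      try (destruct f; reflexivity); try reflexivity.
    unfold idempotent in *; cbn in *. injection H as H. injection H0 as H0.
    f_equal. apply (proj1 (as_adequate F)); assumption.
  - exists (adj_star F a); split; [apply adj_star_idem | apply adj_star_L].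
  - exists (adj_plus F a); split; [apply adj_plus_idem | apply adj_plus_R].
Qed.
Definition AM : adequate_monoid :=
  AdMon (option F) (adj_mul F) (adj_plus F) (adj_star F) (adj_one F)
    adj_mulA adj_mul1l adj_mulr1 adjM_adequate adj_plus_idem adj_plus_R
    adj_star_idem adj_star_L.
End AdjM.

Theorem proposition2p2 (Sigma : Type)
    (M : adequate_monoid) (iotaM : Sigma -> M)
    (F : adequate_semigroup) (iotaF : Sigma -> F) :
  is_free_adequate_monoid Sigma M iotaM ->
  is_free_adequate_semigroup Sigma F iotaF ->
  exists phi : M -> option F, iso_to_adjoin M F phi.
Proof.
  intros HM HF.
  destruct (HM (AM F) (fun s => Some (iotaF s))) as [phi [Hphi [Hphii _]]].
  destruct (HF (toSg M) iotaM) as [g [Hg [Hgi _]]].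
  destruct Hphi as [Pm [Pp [Ps P1]]].
  destruct Hg as [Gm [Gp Gs]].
  exists phi.
  set (psi := fun y : option F => match y with None => am_one M | Some a => g a end).
  split; [exists psi; split|].
  - destruct (HM M iotaM) as [id0 [_ [_ Hu]]].
    assert (Hid : forall x, x = id0 x).
    { apply (Hu (fun x => x)); [|reflexivity]. repeat split; reflexivity. }
    intro x. rewrite (Hu (fun x => psi (phi x))); [symmetry; apply Hid| |].
    + repeat split.
      * intros a b. rewrite Pm. destruct (phi a) as [u|], (phi b) as [v|]; cbn.
        -- apply Gm.
        -- now rewrite am_mulr1.
        -- now rewrite am_mul1l.
        -- now rewrite am_mul1l.
      * intro a. rewrite Pp. destruct (phi a); cbn; [apply Gp | symmetry; apply plus_one].
      * intro a. rewrite Ps. destruct (phi a); cbn; [apply Gs | symmetry; apply star_one].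
      * rewrite P1. reflexivity.
    + intro s. rewrite Hphii. cbn. apply Hgi.
  - intros [a|]; [|exact P1].
    cbn. destruct (HF (toSg (AM F)) (fun s => Some (iotaF s))) as [k [_ [_ Hu]]].
    rewrite (Hu (fun a => phi (g a))), (Hu (fun a => Some a)); try reflexivity.
    + repeat split; reflexivity.
    + repeat split.
      * intros u v. cbn. etransitivity; [|apply Pm]. f_equal. apply Gm.
      * intros u. cbn. etransitivity; [|apply Pp]. f_equal. apply Gp.
      * intros u. cbn. etransitivity; [|apply Ps]. f_equal. apply Gs.
    + intro s. cbn. rewrite Hgi. apply Hphii.
  - split; [exact Pm|split; [exact Pp|split; [exact Ps|exact P1]]].
Qed.
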